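(* Let $A$ and $B$ be flat layouts. Then $\Phi_A=\Phi_B$ if and only if $\mathrm{coal}^\flat(A)=\mathrm{coal}^\flat(B)$.
   Context: A flat layout $L=(s_1,\dots,s_m):(d_1,\dots,d_m)$ consists of a tuple of positive integers (shape) and a tuple of nonnegative integers (stride) of the same length; its modes are $s_i:d_i$. Its layout function $\Phi_L:[0,s_1\cdots s_m)\to\mathbb{Z}$ is $\Phi_L(x)=\sum_{i=1}^m x_id_i$ where $x_i=\lfloor x/(s_1\cdots s_{i-1})\rfloor \bmod s_i$ (so equality $\Phi_A=\Phi_B$ includes equality of domains). $\mathrm{squeeze}(L)$ removes all modes with $s_i=1$. $\mathrm{coal}^\flat(L)$ is obtained from $\mathrm{squeeze}(L)$ by repeatedly replacing adjacent modes $s_i,s_{i+1}:d_i,d_{i+1}$ with $d_{i+1}=s_id_i$ by the single mode $s_is_{i+1}:d_i$, until no such adjacent pair remains (equivalently, merging each maximal run of consecutive modes linked by $d_{i+1}=s_id_i$ into one mode with shape the product and stride the first stride). *)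

(* Defs.v *)
From mathcomp Require Import all_boot.
Set Implicit Arguments. Unset Strict Implicit. Unset Printing Implicit Defensive.

(* A flat layout: list of modes (shape, stride). Shapes are required to be
   positive separately (predicate [layout_ok]). *)
Definition layout := seq (nat * nat).

Definition shapes (L : layout) : seq nat := map fst L.
Definition strides (L : layout) : seq nat := map snd L.

Definition layout_ok (L : layout) : bool := all (fun m => 0 < m.1) L.

Definition lsize (L : layout) : nat := \prod_(m <- L) m.1.

Definition coord (L : layout) (i : nat) (x : nat) : nat :=
  (x %/ \prod_(m <- take i L) m.1) %% (nth (1, 0) L i).1.

Definition layout_fun (L : layout) (x : nat) : nat :=
  \sum_(i < size L) coord L i x * (nth (1, 0) L i).2.

Definition layout_fun_eq (A B : layout) : Prop :=
  lsize A = lsize B /\ forall x, x < lsize A -> layout_fun A x = layout_fun B x.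

Definition squeeze (L : layout) : layout := filter (fun m => m.1 != 1) L.

(* One step of left-to-right coalescing: acc is the already coalesced prefix
   in reverse order. If the last mode (s,d) and new mode (s',d') satisfy
   d' = s*d, they merge into (s*s', d). *)
Definition coal_step (acc : layout) (m : nat * nat) : layout :=
  match acc with
  | (s, d) :: acc' => if m.2 == s * d then (s * m.1, d) :: acc' else m :: acc
  | [::] => [:: m]
  end.

Definition coal_flat (L : layout) : layout :=
  rev (foldl coal_step [::] (squeeze L)).

(* Main.v *)
Require Import Defs.
From mathcomp Require Import all_boot.

Fixpoint lf (L : layout) (x : nat) : nat :=
  match L with
  | [::] => 0
  | m :: L' => (x %% m.1) * m.2 + lf L' (x %/ m.1)
  end.

Lemma lsize_cons m L : lsize (m :: L) = m.1 * lsize L.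
Proof. by rewrite /lsize big_cons. Qed.

Lemma lsize_nil : lsize [::] = 1.
Proof. by rewrite /lsize big_nil. Qed.

Lemma lsize_cat L1 L2 : lsize (L1 ++ L2) = lsize L1 * lsize L2.
Proof. by rewrite /lsize big_cat. Qed.

Lemma coord_cons m L i x :
  coord (m :: L) i.+1 x = coord L i (x %/ m.1).
Proof. by rewrite /coord /= big_cons divnMA. Qed.

Lemma layout_funE L x : layout_fun L x = lf L x.
Proof.
elim: L x => [|m L IH] x; first by rewrite /layout_fun big_ord0.
rewrite /layout_fun /= big_ord_recl /=.
rewrite -IH /layout_fun; congr (_ + _).
  by rewrite /coord /= big_nil divn1.
by apply: eq_bigr => i _; rewrite coord_cons.
Qed.

Lemma lf0 L : lf L 0 = 0.
Proof. by elim: L => [|m L IH] //=; rewrite mod0n div0n IH. Qed.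

Lemma lf_cat L1 L2 x : lf (L1 ++ L2) x = lf L1 x + lf L2 (x %/ lsize L1).
Proof.
elim: L1 x => [|m L1 IH] x /=; first by rewrite lsize_nil divn1.
by rewrite IH lsize_cons divnMA addnA.
Qed.

Definition equiv (L1 L2 : layout) :=
  lsize L1 = lsize L2 /\ forall x, lf L1 x = lf L2 x.

Lemma equiv_catl L1 L1' L2 : equiv L1 L1' -> equiv (L1 ++ L2) (L1' ++ L2).
Proof.
move=> [Hs Hf]; split; first by rewrite !lsize_cat Hs.
by move=> x; rewrite !lf_cat Hs Hf.
Qed.

Lemma equiv_catr L1 L2 L2' : equiv L2 L2' -> equiv (L1 ++ L2) (L1 ++ L2').
Proof.
move=> [Hs Hf]; split; first by rewrite !lsize_cat Hs.
by move=> x; rewrite !lf_cat Hf.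
Qed.

Lemma equiv_trans L1 L2 L3 : equiv L1 L2 -> equiv L2 L3 -> equiv L1 L3.
Proof. by move=> [h1 h2] [h3 h4]; split=> [|x]; rewrite ?h1 ?h2. Qed.

Lemma equiv_sym L1 L2 : equiv L1 L2 -> equiv L2 L1.
Proof. by move=> [h1 h2]; split=> [|x]; rewrite ?h1 ?h2. Qed.

Lemma equiv_refl L : equiv L L.
Proof. by []. Qed.

Lemma mod_mul x s s' : 0 < s -> x %% (s * s') = x %% s + s * ((x %/ s) %% s').
Proof.
move=> s0.
rewrite modn_divl [s' * s]mulnC.
set r := x %% (s * s').
have -> : x %% s = r %% s by rewrite /r modn_dvdm // dvdn_mulr.
by rewrite {1}(divn_eq r s) addnC mulnC.
Qed.

Lemma equiv_merge s d s' : 0 < s ->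
  equiv [:: (s, d); (s', s * d)] [:: (s * s', d)].
Proof.
move=> s0; split.
  by rewrite !lsize_cons lsize_nil /= !muln1.
move=> x /=; rewrite !addn0 mod_mul // mulnDl.
congr (_ + _); rewrite mulnA; congr (_ * _); exact: mulnC.
Qed.

Lemma squeeze_equiv L : equiv (squeeze L) L.
Proof.
elim: L => [|[s d] L [IHs IHf]] //=; rewrite /squeeze /=.
case: eqP => [->|_].
  split; first by rewrite lsize_cons IHs mul1n.
  by move=> x /=; rewrite modn1 divn1 mul0n IHf.
split; first by rewrite !lsize_cons IHs.
by move=> x /=; rewrite IHf.
Qed.

Definition okpos (L : layout) := all (fun m => 0 < m.1) L.

Lemma step_equiv acc m : okpos acc ->
  equiv (rev (coal_step acc m)) (rcons (rev acc) m).
Proof.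
case: acc => [|[s d] acc] //= /andP [/= s0 _].
case: eqP => [E|_]; last by rewrite rev_cons.
rewrite rev_cons -cats1 rev_cons -!cats1 -catA.
apply: equiv_catr; case: m E => s' d' /= ->.
exact: equiv_sym (equiv_merge _ _ _ s0).
Qed.

Lemma step_okpos acc m : okpos acc -> 0 < m.1 -> okpos (coal_step acc m).
Proof.
case: acc => [|[s d] acc] /=; first by rewrite andbT.
move=> /andP [s0 H] m0; case: eqP => _ /=.
  by rewrite muln_gt0 s0 m0.
by rewrite m0 s0.
Qed.

Lemma fold_equiv acc L : okpos acc -> okpos L ->
  equiv (rev (foldl coal_step acc L)) (rev acc ++ L).
Proof.
elim: L acc => [|m L IH] acc Ha /=; first by rewrite cats0.
move=> /andP [m0 HL].
apply: equiv_trans (IH _ (step_okpos _ _ Ha m0) HL) _.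
rewrite -cat_rcons; apply: equiv_catl; exact: step_equiv.
Qed.

Lemma okpos_squeeze L : okpos L -> okpos (squeeze L).
Proof. by move=> H; rewrite /okpos /squeeze all_filter; apply: sub_all H => m /= ->; rewrite implybT. Qed.

Lemma coal_equiv L : layout_ok L -> equiv (coal_flat L) L.
Proof.
move=> H; rewrite /coal_flat.
exact: equiv_trans (fold_equiv [::] (squeeze L) isT (okpos_squeeze _ H)) (squeeze_equiv L).
Qed.

Definition nm (x y : nat * nat) := y.2 != x.1 * x.2.

Definition canon (L : layout) := all (fun m => 1 < m.1) L && sorted nm L.

Lemma step_canr acc m : all (fun m => 1 < m.1) acc -> sorted (fun x y => nm y x) acc ->
  1 < m.1 ->
  all (fun m => 1 < m.1) (coal_step acc m) && sorted (fun x y => nm y x) (coal_step acc m).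
Proof.
case: acc => [|[s d] acc] /=; first by move=> _ _ ->.
move=> /andP [s1 Ha] Hs m1; case: eqP => E /=.
  rewrite Ha andbT.
  have -> : 1 < s * m.1 by rewrite (leq_trans m1) // leq_pmull // ltnW.
  by case: acc Hs {Ha}.
by rewrite m1 s1 Ha /= Hs andbT; apply/eqP.
Qed.

Lemma fold_canr acc L : all (fun m => 1 < m.1) acc -> sorted (fun x y => nm y x) acc ->
  all (fun m => 1 < m.1) L ->
  let r := foldl coal_step acc L in
  all (fun m => 1 < m.1) r && sorted (fun x y => nm y x) r.
Proof.
elim: L acc => [|m L IH] acc Ha Hs /=; first by rewrite Ha Hs.
move=> /andP [m1 HL].
have /andP [H1 H2] := step_canr _ _ Ha Hs m1.
exact: IH.
Qed.

Lemma coal_canon L : layout_ok L -> canon (coal_flat L).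
Proof.
move=> H; rewrite /canon /coal_flat all_rev rev_sorted.
apply: fold_canr => //.
rewrite /squeeze all_filter; apply: sub_all H => m /=.
by case: m.1 => [|[|n]].
Qed.

Lemma lsize_gt1 C : all (fun m => 1 < m.1) C -> C != [::] -> 1 < lsize C.
Proof.
elim: C => [|m C IH] //= /andP [m1 H] _.
rewrite lsize_cons; case: C IH H => [|m' C'] IH H.
  by rewrite lsize_nil muln1.
have := IH H isT => h.
by rewrite (leq_trans m1) // leq_pmulr // ltnW.
Qed.

Lemma lsize_pos C : all (fun m => 1 < m.1) C -> 0 < lsize C.
Proof.
case: C => [|m C] H; first by rewrite lsize_nil.
by apply: ltnW; apply: lsize_gt1.
Qed.

Lemma not_lt s d C t D :
  canon ((s, d) :: C) -> canon ((t, d) :: D) ->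
  lsize ((s, d) :: C) = lsize ((t, d) :: D) ->
  (forall x, x < lsize ((s, d) :: C) -> lf ((s, d) :: C) x = lf ((t, d) :: D) x) ->
  ~ s < t.
Proof.
move=> /andP [/= /andP [s1 HC] HsC] /andP [/= /andP [t1 HD] HsD] Hsz Hf lt.
case: C HC HsC Hsz Hf => [|[s2 d2] C] HC HsC Hsz Hf.
  move: Hsz; rewrite !lsize_cons lsize_nil /= muln1 => Hsz.
  have : t <= t * lsize D by rewrite leq_pmulr // lsize_pos.
  by rewrite -Hsz leqNgt lt.
have Hs : s < lsize ((s, d) :: (s2, d2) :: C).
  rewrite lsize_cons /= -{1}(muln1 s) ltn_pmul2l ?(ltnW s1) //.
  exact: lsize_gt1.
have := Hf s Hs => /=.
have ss : s %/ s = 1 by rewrite divnn (ltnW s1).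
rewrite modnn ss mul0n add0n (modn_small lt) (divn_small lt) lf0 addn0.
move: HC => /andP [/= s21 _].
rewrite (modn_small s21) (divn_small s21) mul1n lf0 addn0 => E.
by move: HsC => /= /andP [/eqP]; rewrite /nm /= E mulnC.
Qed.

Lemma canon_unique C D : canon C -> canon D ->
  lsize C = lsize D -> (forall x, x < lsize C -> lf C x = lf D x) -> C = D.
Proof.
elim: C D => [|[s d] C IH] [|[t e] D] //.
- move=> _ /andP [HD _] Hsz _; move: (lsize_gt1 _ HD isT); by rewrite -Hsz lsize_nil.
- move=> /andP [HC _] _ Hsz _; move: (lsize_gt1 _ HC isT); by rewrite Hsz lsize_nil.
move=> cC cD Hsz Hf.
have [s1 t1] : 1 < s /\ 1 < t.
  by move: cC cD => /andP [/= /andP [-> _] _] /andP [/= /andP [-> _] _].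
have de : d = e.
  have h1 : 1 < lsize ((s, d) :: C) by apply: lsize_gt1 => //; case/andP: cC.
  have := Hf 1 h1 => /=.
  by rewrite !modn_small // !divn_small // !lf0 !mul1n !addn0.
subst e.
have st : s = t.
  case: (ltngtP s t) => // lt; first by case: (not_lt _ _ _ _ _ cC cD Hsz Hf lt).
  case: (not_lt _ _ _ _ _ cD cC (esym Hsz) _ lt) => x.
  by rewrite -Hsz => Hx; rewrite Hf.
subst t.
have cC' : canon C by move: cC => /andP [/= /andP [_ HC] /path_sorted Hs]; rewrite /canon HC.
have cD' : canon D by move: cD => /andP [/= /andP [_ HC] /path_sorted Hs]; rewrite /canon HC.
have s0 : 0 < s by apply: ltnW.
have Hsz' : lsize C = lsize D.
  by move: Hsz; rewrite !lsize_cons /= => /eqP; rewrite eqn_pmul2l // => /eqP.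
congr (_ :: _); apply: IH => // y Hy.
have Hy' : y * s < lsize ((s, d) :: C) by rewrite lsize_cons /= mulnC ltn_pmul2l.
have := Hf _ Hy' => /=.
by rewrite modnMl mulnK // !mul0n !add0n.
Qed.

Theorem mainTheorem10 (A B : layout) :
  layout_ok A -> layout_ok B ->
  (layout_fun_eq A B <-> coal_flat A = coal_flat B).
Proof.
move=> HA HB.
have [eA fA] := coal_equiv _ HA; have [eB fB] := coal_equiv _ HB.
split.
  move=> [Hsz Hf]; apply: canon_unique; try exact: coal_canon.
    by rewrite eA eB.
  move=> x; rewrite eA fA fB => Hx; have := Hf x Hx.
  by rewrite !layout_funE.
move=> E; split; first by rewrite -eA -eB E.
move=> x _; rewrite !layout_funE -fA -fB E //.
Qed.
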